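(* In the max-plus semiring $\mathbb{Q}_{\max}$, the set $$\mathscr{S}=\big\{(u_1,v_1,u_2,v_2)\in\mathbb{Q}_{\max}^4:\ \forall k\in\mathbb{N},\ \max(u_1+kv_1,\ u_2+kv_2)\ge0\big\}$$ (i.e. the set of evaluations $(u_1,v_1,u_2,v_2)$ for which $u_1(v_1X)^*\oplus u_2(v_2X)^*\ge(0X)^*$ coefficientwise) is not semi-polyhedral.
   Context: $\mathbb{Q}_{\max}$ is $\mathbb{Q}\cup\{-\infty\}$ with $a\oplus b=\max(a,b)$ and $a\otimes b=a+b$; the term $u+kv$ denotes the max-plus product $u\otimes v^{\otimes k}$ (with $v^{\otimes 0}=0$, the unit), and the order is the usual order with $-\infty$ smallest. A monomial on $\mathbb{Q}_{\max}^4$ is $m(x)=a\otimes x_1^{\otimes\alpha_1}\otimes\cdots\otimes x_4^{\otimes\alpha_4}$ with $a\in\mathbb{Q}_{\max}$, $\alpha_i\in\mathbb{N}$ (in usual notation $a+\sum_i\alpha_ix_i$); a half-space is $\{x:m(x)\ge m'(x)\}$ for monomials $m,m'$; a polyhedron is a finite intersection of half-spaces; a semi-polyhedral set is a finite union of polyhedra. *)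

(* Defs.v *)
From Stdlib Require Import List.
From HB Require Import structures.
From mathcomp Require Import all_boot all_order all_algebra.
Set Implicit Arguments. Unset Strict Implicit. Unset Printing Implicit Defensive.
Import Order.TTheory GRing.Theory Num.Theory.

Inductive qmax : Type := NegInf | Fin of rat.

Definition qmax_add (a b : qmax) : qmax :=
  match a, b with
  | NegInf, _ => b
  | _, NegInf => a
  | Fin x, Fin y => Fin (Num.max x y)
  end.

Definition qmax_mul (a b : qmax) : qmax :=
  match a, b with
  | Fin x, Fin y => Fin (x + y)%R
  | _, _ => NegInf
  end.

Definition qmax_one : qmax := Fin 0%R.

Fixpoint qmax_pow (v : qmax) (k : nat) : qmax :=
  match k with
  | 0 => qmax_one
  | k'.+1 => qmax_mul v (qmax_pow v k')
  end.

Definition qmax_le (a b : qmax) : Prop :=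
  match a, b with
  | NegInf, _ => True
  | Fin _, NegInf => False
  | Fin x, Fin y => (x <= y)%R
  end.

Record monomial (n : nat) := Monomial { mcoef : qmax; mexp : 'I_n -> nat }.

Definition point (n : nat) := 'I_n -> qmax.

Definition meval (n : nat) (m : monomial n) (x : point n) : qmax :=
  foldr (fun i acc => qmax_mul acc (qmax_pow (x i) (mexp m i)))
        (mcoef m) (enum 'I_n).

Definition in_halfspace (n : nat) (h : monomial n * monomial n) (x : point n) : Prop :=
  qmax_le (meval h.2 x) (meval h.1 x).

Definition in_polyhedron (n : nat) (P : seq (monomial n * monomial n)) (x : point n) : Prop :=
  forall h, List.In h P -> in_halfspace h x.

Definition semi_polyhedral (n : nat) (S : point n -> Prop) : Prop :=
  exists Ps : seq (seq (monomial n * monomial n)),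
    forall x, S x <-> exists2 P, List.In P Ps & in_polyhedron P x.

(* The set 𝒮 ⊆ Q_max^4, coordinates (u1, v1, u2, v2) = (x 0, x 1, x 2, x 3). *)
Definition setS (x : point 4) : Prop :=
  forall k : nat,
    qmax_le qmax_one
      (qmax_add (qmax_mul (x (inord 0)) (qmax_pow (x (inord 1)) k))
                (qmax_mul (x (inord 2)) (qmax_pow (x (inord 3)) k))).

(* Main.v *)
Require Import Defs.
From Stdlib Require Import List Classical Lia.
From mathcomp Require Import all_boot all_order all_algebra.
Set Implicit Arguments. Unset Strict Implicit. Unset Printing Implicit Defensive.
Import Order.TTheory GRing.Theory Num.Theory.
Local Open Scope ring_scope.

Definition xpt (t : rat) : point 4 := fun j =>
  match nat_of_ord j with
  | 0 => Fin (-1 + t * -1)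
  | 1 => Fin (1 + t * 0)
  | 2 => Fin (0 + t * 1)
  | _ => Fin (-1 + t * 0)
  end.

Lemma xpt_aff (j : 'I_4) : exists p q, forall t, xpt t j = Fin (p + t * q).
Proof. by case: j => [[|[|[|k]]] ?]; do 2 eexists; move=> t; reflexivity. Qed.

Lemma pow_fin (c : rat) k : qmax_pow (Fin c) k = Fin (c *+ k).
Proof. by elim: k => [|k IH] //=; rewrite IH mulrS. Qed.

Lemma meval_aff (m : monomial 4) :
  (forall t, meval m (xpt t) = NegInf) \/
  exists c d, forall t, meval m (xpt t) = Fin (c + t * d).
Proof.
rewrite /meval; elim: (enum 'I_4) => [|i s IH] /=.
  case: (mcoef m) => [|a]; [by left|right; exists a, 0 => t; by rewrite mulr0 addr0].
case: IH => [H|[c [d H]]]; first by left => t; rewrite H.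
right; have [p [q Hpq]] := xpt_aff i.
exists (c + p *+ mexp m i), (d + q *+ mexp m i) => t.
rewrite H Hpq pow_fin /= mulrnDl mulrDr -mulrnAr.
by rewrite addrACA.
Qed.

Lemma aff_conv (R : realDomainType) (e f a b t : R) : 0 <= e + a * f -> 0 <= e + b * f ->
  a <= t -> t <= b -> 0 <= e + t * f.
Proof.
move=> Ha Hb ha tb; case: (leP 0 f) => Hf.
  apply: (le_trans Ha); rewrite lerD2l; exact: ler_wpM2r.
apply: (le_trans Hb); rewrite lerD2l; apply: ler_wnM2r => //; exact: ltW.
Qed.

Lemma aff_conv2 (R : realDomainType) (c d c' d' a b t : R) :
  c' + a * d' <= c + a * d -> c' + b * d' <= c + b * d ->
  a <= t -> t <= b -> c' + t * d' <= c + t * d.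
Proof.
have E : forall x, (c + x * d) - (c' + x * d') = (c - c') + x * (d - d').
  by move=> x; rewrite mulrBr opprD addrACA.
move=> h1 h2 ha tb; rewrite -subr_ge0 E.
by apply: (aff_conv _ _ ha tb); rewrite -E subr_ge0.
Qed.

Lemma poly_conv P (a b t : rat) : in_polyhedron P (xpt a) -> in_polyhedron P (xpt b) ->
  a <= t -> t <= b -> in_polyhedron P (xpt t).
Proof.
move=> Ha Hb ha tb h hP; move: (Ha h hP) (Hb h hP); rewrite /in_halfspace.
case: (meval_aff h.2) => [H2|[c' [d' H2]]]; first by move=> _ _; rewrite H2.
case: (meval_aff h.1) => [H1|[c [d H1]]]; first by rewrite !H1 !H2.
rewrite !H1 !H2 /=; move=> A B; exact: aff_conv2 A B ha tb.
Qed.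

Lemma pigeon (A : Type) (F : A -> rat -> Prop)
  (conv : forall x a b t, F x a -> F x b -> a <= t -> t <= b -> F x t) :
  forall n (L : list A), length L = n ->
  (forall i : nat, (i <= n)%N -> exists2 x, List.In x L & F x i%:R) ->
  exists x (i : nat), List.In x L /\ F x (i%:R + 1/2).
Proof.
elim=> [|n IH] L HL Hcov.
  have [x Hx _] := Hcov 0%N (leqnn 0); by destruct L.
have [x Hx Fx] := Hcov n.+1 (leqnn _).
case: (classic (exists i : nat, (i <= n)%N /\ F x i%:R)) => [[i [Hi Fi]]|Hno].
  exists x, i; split => //; apply: (conv _ _ _ _ Fi Fx).
    by rewrite lerDl.
  rewrite -[n.+1%:R]natr1; apply: lerD; first by rewrite ler_nat.
  by [].
have [l1 [l2 EL]] := List.in_split x L Hx.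
have [y [i [Hy Fy]]] : exists y (i : nat), List.In y (l1 ++ l2) /\ F y (i%:R + 1/2).
  apply: (IH (l1 ++ l2)).
    move: HL; rewrite EL !List.length_app /=; lia.
  move=> i Hi; have [y Hy Fy] := Hcov i (leqW Hi).
  exists y => //; rewrite EL in Hy; case: (List.in_app_or _ _ _ Hy) => [Hy'|[Hy'|Hy']].
  - by apply: List.in_or_app; left.
  - by subst y; exfalso; apply: Hno; exists i.
  - by apply: List.in_or_app; right.
exists y, i; split => //; rewrite EL; apply: List.in_or_app.
by case: (List.in_app_or _ _ _ Hy); [left | right; right].
Qed.

Lemma inS (n : nat) : setS (xpt n%:R).
Proof.
move=> k; rewrite /xpt !inordK //= !pow_fin /=.
rewrite le_max mulrN1 mulr0 mulr1 addr0 add0r -opprD nat1r.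
case: (leqP k n) => Hk; apply/orP; [right|left].
  by rewrite addr0 mulNrn subr_ge0 ler_nat.
by rewrite addrC subr_ge0 ler_nat.
Qed.

Lemma notS (n : nat) : ~ setS (xpt (n%:R + 1/2)).
Proof.
move=> H; move: (H n.+1); rewrite /xpt !inordK //= !pow_fin /=.
rewrite le_max mulrN1 mulr0 mulr1 addr0 add0r -opprD addr0 -mulrS mulNrn.
apply/negP; rewrite negb_or -!ltNge; apply/andP; split.
  by rewrite addrC subr_lt0 -[n.+1%:R]nat1r ltrD2l ltrDl.
by rewrite -opprD nat1r subr_lt0 -[n.+1%:R]natr1 ltrD2l.
Qed.

Theorem mainTheorem14 : ~ semi_polyhedral setS.
Proof.
move=> [Ps HPs].
have [P [i [HP Pi]]] := @pigeon _ (fun P t => in_polyhedron P (xpt t))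
  (fun P a b t => @poly_conv P a b t) (length Ps) Ps erefl
  (fun i _ => proj1 (HPs (xpt i%:R)) (inS i)).
apply: (@notS i); apply/HPs; by exists P.
Qed.
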